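(* Let $M$ be a connected matroid, let $N$ be a minor of $M$ with no loops and no coloops, and let $(A,B)$ be a $2$-separation of $M$ with $B\cap E(N)=\{f\}$. If $f$ is not in series or in parallel with any other element of $M$, then there exists an element $e\in B\setminus\{f\}$ such that both $M\setminus e$ and $M/e$ have $N$ as a minor.
   Context: $\lambda_M(X) = \rank_M(X) + \rank_M(E(M)\setminus X) - \rank(M)$. A $2$-separation of $M$ is a partition $(A,B)$ of $E(M)$ with $|A|,|B|\geq 2$ and $\lambda_M(A)<2$. ''$M'$ has $N$ as a minor'' means $N$ itself (with labelled ground set) equals $M'/C\setminus D$ for some disjoint $C,D\subseteq E(M')$. *)

(* Defs.v *)
From mathcomp Require Import all_boot.
Set Implicit Arguments. Unset Strict Implicit. Unset Printing Implicit Defensive.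

Section Matroids.
Variable T : finType.

Record mstruct := MStruct { ground : {set T}; indep : {set {set T}} }.

Definition is_matroid (M : mstruct) : Prop :=
  [/\ forall I : {set T}, I \in indep M -> I \subset ground M,
      set0 \in indep M,
      forall I J : {set T}, J \in indep M -> I \subset J -> I \in indep M &
      forall I J : {set T}, I \in indep M -> J \in indep M -> #|I| < #|J| ->
        exists2 x, x \in J :\: I & x |: I \in indep M].

Definition rank (M : mstruct) (X : {set T}) : nat :=
  \max_(I in indep M | I \subset X) #|I|.

Definition mrank (M : mstruct) : nat := rank M (ground M).

Definition lambda (M : mstruct) (X : {set T}) : nat :=
  rank M X + rank M (ground M :\: X) - mrank M.

Definition two_separation (M : mstruct) (A B : {set T}) : Prop :=
  [/\ A :|: B = ground M, [disjoint A & B], 2 <= #|A|, 2 <= #|B| &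
      lambda M A < 2].

Definition basis (M : mstruct) (B : {set T}) : bool :=
  (B \in indep M) && [forall x, (x \in ground M :\: B) ==> (x |: B \notin indep M)].

Definition dual (M : mstruct) : mstruct :=
  MStruct (ground M)
    [set I : {set T} | (I \subset ground M) && [exists B : {set T}, basis M B && [disjoint I & B]]].

Definition circuit (M : mstruct) (C : {set T}) : Prop :=
  [/\ C \subset ground M, C \notin indep M &
      forall Y : {set T}, Y \proper C -> Y \in indep M].

Definition cocircuit (M : mstruct) (C : {set T}) : Prop := circuit (dual M) C.

Definition is_loop (M : mstruct) (e : T) : Prop :=
  e \in ground M /\ [set e] \notin indep M.

Definition is_coloop (M : mstruct) (e : T) : Prop := is_loop (dual M) e.

Definition in_parallel (M : mstruct) (e f : T) : Prop := circuit M [set e; f].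
Definition in_series (M : mstruct) (e f : T) : Prop := cocircuit M [set e; f].

Definition connected (M : mstruct) : Prop :=
  forall x y, x \in ground M -> y \in ground M -> x != y ->
    exists C : {set T}, [/\ circuit M C, x \in C & y \in C].

Definition delete (M : mstruct) (D : {set T}) : mstruct :=
  MStruct (ground M :\: D) [set I : {set T} in indep M | I \subset ground M :\: D].

Definition contract (M : mstruct) (C : {set T}) : mstruct :=
  MStruct (ground M :\: C)
    [set I : {set T} | (I \subset ground M :\: C) &&
             (rank M (I :|: C) == #|I| + rank M C)].

Definition has_minor (M N : mstruct) : Prop :=
  exists C D : {set T},
    [/\ C :|: D \subset ground M, [disjoint C & D] &
        N = delete (contract M C) D].

End Matroids.

(* Main.v *)
Require Import Defs.
From mathcomp Require Import all_boot.
From mathcomp Require Import zify.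
From Stdlib Require Import Classical.
Set Implicit Arguments. Unset Strict Implicit. Unset Printing Implicit Defensive.

Definition rankfun (U : finType) (R : {set U} -> nat) : Prop :=
  [/\ forall X : {set U}, R X <= #|X|, forall X Y : {set U}, X \subset Y -> R X <= R Y &
      forall X Y : {set U}, R (X :|: Y) + R (X :&: Y) <= R X + R Y].

Lemma setUD_sub (T : finType) (I X : {set T}) : I \subset X -> I :|: (X :\: I) = X.
Proof.
move=> sIX; apply/setP => z; rewrite !inE.
by case zI: (z \in I) => //=; rewrite (subsetP sIX).
Qed.

Lemma rk_le U R (hR : @rankfun U R) (X : {set U}) : R X <= #|X|.
Proof. by case: hR. Qed.
Lemma rk_mono U R (hR : @rankfun U R) (X Y : {set U}) : X \subset Y -> R X <= R Y.
Proof. by case: hR => _ h _; apply: h. Qed.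
Lemma rk_sub U R (hR : @rankfun U R) (X Y : {set U}) : R (X :|: Y) + R (X :&: Y) <= R X + R Y.
Proof. by case: hR. Qed.
Lemma rk0 U R (hR : @rankfun U R) : R set0 = 0.
Proof. by have := rk_le hR set0; rewrite cards0; lia. Qed.
Lemma rk_U U R (hR : @rankfun U R) (X Y : {set U}) : R (X :|: Y) <= R X + R Y.
Proof. by have := rk_sub hR X Y; lia. Qed.
Lemma rk1 U R (hR : @rankfun U R) (x : U) : R [set x] <= 1.
Proof. by have := rk_le hR [set x]; rewrite cards1. Qed.
Lemma rk_add1 U R (hR : @rankfun U R) (x : U) (X : {set U}) : R (x |: X) <= (R X).+1.
Proof. by have := rk_U hR [set x] X; have := rk1 hR x; lia. Qed.
Lemma rk_add1' U R (hR : @rankfun U R) (x : U) (X : {set U}) : R X <= R (x |: X).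
Proof. by apply: (rk_mono hR); apply: subsetUr. Qed.

Lemma rk_cl U R (hR : @rankfun U R) (X Y Z : {set U}) :
  X \subset Y -> R X = R Y -> R (X :|: Z) = R (Y :|: Z).
Proof.
move=> sXY eXY.
have h1 : R (X :|: Z) <= R (Y :|: Z) by apply: (rk_mono hR); apply: setSU.
have := rk_sub hR Y (X :|: Z).
have -> : Y :|: (X :|: Z) = Y :|: Z.
  by rewrite setUA (setUidPl sXY).
have : R X <= R (Y :&: (X :|: Z)).
  by apply: (rk_mono hR); rewrite subsetI sXY subsetUl.
lia.
Qed.

Lemma rk_addall U R (hR : @rankfun U R) (X Z : {set U}) :
  (forall z, z \in Z -> R (z |: X) = R X) -> R (X :|: Z) = R X.
Proof.
move: {2}#|Z| (leqnn #|Z|) => n; elim: n Z => [|n IH] Z hn hz.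
  have -> : Z = set0 by apply/eqP; rewrite -cards_eq0; lia.
  by rewrite setU0.
case: (set_0Vmem Z) => [->|[z zZ]]; first by rewrite setU0.
have eZ : Z = z |: (Z :\ z) by rewrite setD1K.
have IH' : R (X :|: (Z :\ z)) = R X.
  apply: IH; first by rewrite (cardsD1 z Z) zZ in hn; lia.
  by move=> w; rewrite in_setD1 => /andP[_ /hz].
have := rk_cl hR [set z] (subsetUl X (Z :\ z)) (esym IH').
have -> : X :|: (Z :\ z) :|: [set z] = X :|: Z by rewrite -setUA (setUC _ [set z]) -eZ.
by rewrite setUC -/(z |: X) hz.
Qed.

Lemma rk_extend U R (hR : @rankfun U R) (I X : {set U}) :
  I \subset X -> R I = #|I| ->
  exists J : {set U}, [/\ I \subset J, J \subset X, R J = #|J| & R J = R X].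
Proof.
move: {2}#|X :\: I| (leqnn #|X :\: I|) => n; elim: n I => [|n IH] I hn sIX hI.
  exists I; split => //.
  have : X :\: I = set0 by apply/eqP; rewrite -cards_eq0; lia.
  by move/eqP; rewrite setD_eq0 => sXI; rewrite (_ : X = I) //; apply/eqP; rewrite eqEsubset sXI.
case: (boolP [exists z, (z \in X :\: I) && (R (z |: I) != R I)]).
  case/existsP => z /andP[zXI nz].
  have zI : z \notin I by move: zXI; rewrite inE => /andP[].
  have zX : z \in X by move: zXI; rewrite inE => /andP[].
  have hz : R (z |: I) = #|z |: I|.
    rewrite cardsU1 zI /=; have := rk_add1 hR z I; have := rk_add1' hR z I.
    move: nz => /eqP; lia.
  have hlt : #|X :\: (z |: I)| < #|X :\: I|.
    apply: proper_card; rewrite properEneq; apply/andP; split.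
      apply/negP => /eqP e; move: zXI; rewrite -e !inE eqxx; by [].
    by apply: setDS; apply: subsetUr.
  have hsub : z |: I \subset X by rewrite subUset sub1set zX sIX.
  have [J [h1 h2 h3 h4]] := IH (z |: I) ltac:(lia) hsub hz.
  exists J; split => //; apply: subset_trans h1; exact: subsetUr.
move=> hno; exists I; split => //.
have e : X = I :|: (X :\: I) by rewrite setUD_sub.
rewrite e (rk_addall hR) // => z zXI.
apply/eqP; apply: contraNT hno => hne; apply/existsP; exists z; by rewrite zXI hne.
Qed.

Lemma rk_exind U R (hR : @rankfun U R) (X : {set U}) :
  exists I : {set U}, [/\ I \subset X, R I = #|I| & R I = R X].
Proof.
have [J [_ h2 h3 h4]] := rk_extend hR (sub0set X) (esym (etrans (cards0 _) (esym (rk0 hR)))).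
by exists J.
Qed.

Lemma rk_indsub U R (hR : @rankfun U R) (S T : {set U}) :
  R S = #|S| -> T \subset S -> R T = #|T|.
Proof.
move=> hS sTS.
have e : S = T :|: (S :\: T) by rewrite setUD_sub.
have := rk_U hR T (S :\: T); rewrite -e hS.
have := rk_le hR (S :\: T); have := rk_le hR T.
rewrite (cardsD S T) (setIidPr sTS) => h1 h2.
have := subset_leq_card sTS. lia.
Qed.

Lemma rank_ub (T : finType) (M : mstruct T) (X I : {set T}) :
  I \in indep M -> I \subset X -> #|I| <= rank M X.
Proof.
move=> hI hIX; rewrite /rank.
exact: (leq_bigmax_cond (P := fun J => (J \in indep M) && (J \subset X)) (F := fun J => #|J|) I (introT andP (conj hI hIX))).
Qed.

Lemma rank_lub (T : finType) (M : mstruct T) (X : {set T}) m :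
  (forall I, I \in indep M -> I \subset X -> #|I| <= m) -> rank M X <= m.
Proof.
move=> h; rewrite /rank; apply/bigmax_leqP => I /andP[h1 h2]; exact: h.
Qed.

Lemma rank_ex (T : finType) (M : mstruct T) (hM : is_matroid M) (X : {set T}) :
  exists I : {set T}, [/\ I \in indep M, I \subset X & #|I| = rank M X].
Proof.
case: hM => _ h0 _ _.
have P0 : (set0 \in indep M) && (set0 \subset X) by rewrite h0 sub0set.
rewrite /rank (bigmax_eq_arg set0 P0).
case: arg_maxnP => //= I /andP[h1 h2] _.
by exists I.
Qed.

Lemma rank_aug (T : finType) (M : mstruct T) (hM : is_matroid M) (X I : {set T}) :
  I \in indep M -> I \subset X ->
  exists J : {set T}, [/\ J \in indep M, I \subset J, J \subset X & #|J| = rank M X].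
Proof.
have [J0 [hJ0 sJ0 cJ0]] := rank_ex hM X.
case: hM => _ _ _ haug.
move: {2}(rank M X - #|I|) (leqnn (rank M X - #|I|)) => n.
elim: n I => [|n IH] I hn hI sIX.
  exists I; split => //; have := rank_ub hI sIX; lia.
case: (ltnP #|I| #|J0|) => hlt.
  have [x /setDP[xJ0 xI] hx] := haug I J0 hI hJ0 hlt.
  have sx : x |: I \subset X by rewrite subUset sub1set (subsetP sJ0 x xJ0) sIX.
  have hc : #|x |: I| = #|I|.+1 by rewrite cardsU1 xI.
  have [J [h1 h2 h3 h4]] := IH (x |: I) ltac:(lia) hx sx.
  exists J; split => //; apply: subset_trans h2; exact: subsetUr.
exists I; split => //; have := rank_ub hI sIX; lia.
Qed.

Lemma rank_indep (T : finType) (M : mstruct T) (hM : is_matroid M) (I : {set T}) :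
  (I \in indep M) = (rank M I == #|I|).
Proof.
apply/idP/idP.
  move=> hI; rewrite eqn_leq rank_ub // andbT.
  by apply: rank_lub => J _ sJ; apply: subset_leq_card.
move/eqP=> e.
have [J [hJ sJ cJ]] := rank_ex hM I.
have : J = I.
  apply/eqP; rewrite eqEcard sJ /=; lia.
by move=> <-.
Qed.

Lemma rank_ground (T : finType) (M : mstruct T) (hM : is_matroid M) (X : {set T}) :
  rank M X = rank M (X :&: ground M).
Proof.
case: hM => hg _ _ _.
apply/eqP; rewrite eqn_leq; apply/andP; split; apply: rank_lub => I hI sI.
  by apply: rank_ub => //; rewrite subsetI sI hg.
by apply: rank_ub => //; apply: subset_trans sI (subsetIl _ _).
Qed.

Lemma rank_rankfun (T : finType) (M : mstruct T) (hM : is_matroid M) :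
  rankfun (rank M).
Proof.
have hd : forall I J : {set T}, J \in indep M -> I \subset J -> I \in indep M.
  by case: hM.
split.
- by move=> X; apply: rank_lub => I _ sI; apply: subset_leq_card.
- move=> X Y sXY; apply: rank_lub => I hI sI; apply: rank_ub => //; exact: subset_trans sXY.
move=> X Y.
have [I0 [hI0 sI0 cI0]] := rank_ex hM (X :&: Y).
have sI0' : I0 \subset X :|: Y.
  by apply: subset_trans sI0 _; apply: subset_trans (subsetIl X Y) (subsetUl X Y).
have [J [hJ sIJ sJ cJ]] := rank_aug hM hI0 sI0'.
have h1 : #|J :&: X| <= rank M X.
  by apply: rank_ub; [apply: hd hJ _; apply: subsetIl | apply: subsetIr].
have h2 : #|J :&: Y| <= rank M Y.
  by apply: rank_ub; [apply: hd hJ _; apply: subsetIl | apply: subsetIr].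
have h3 : #|J :&: (X :&: Y)| <= rank M (X :&: Y).
  by apply: rank_ub; [apply: hd hJ _; apply: subsetIl | apply: subsetIr].
have h4 : #|I0| <= #|J :&: (X :&: Y)| by apply: subset_leq_card; rewrite subsetI sIJ sI0.
have e1 : (J :&: X) :|: (J :&: Y) = J by rewrite -setIUr; apply/setIidPl.
have e2 : (J :&: X) :&: (J :&: Y) = J :&: (X :&: Y) by rewrite setIACA setIid.
have := cardsUI (J :&: X) (J :&: Y); rewrite e1 e2.
lia.
Qed.

Definition rstruct (T : finType) (M : mstruct T) (R : {set T} -> nat) :=
  [/\ rankfun R, forall I, (I \in indep M) = (R I == #|I|) &
      forall I, I \in indep M -> I \subset ground M].

Lemma rstruct_matroid (T : finType) (M : mstruct T) : is_matroid M -> rstruct M (rank M).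
Proof.
move=> hM; split; [exact: rank_rankfun | exact: rank_indep |].
by case: hM.
Qed.

Lemma rstruct_rank (T : finType) (M : mstruct T) R (X : {set T}) :
  rstruct M R -> rank M X = R X.
Proof.
case=> hR hI _; apply/eqP; rewrite eqn_leq; apply/andP; split.
  apply: rank_lub => I; rewrite hI => /eqP <- sI; exact: (rk_mono hR).
have [I [sI h1 h2]] := rk_exind hR X.
rewrite -h2 h1; apply: rank_ub => //; by rewrite hI h1.
Qed.

Lemma rstruct_ground (T : finType) (M : mstruct T) R (X : {set T}) :
  rstruct M R -> R X = R (X :&: ground M).
Proof.
move=> hs; rewrite -!(rstruct_rank _ hs); case: hs => _ _ hg.
apply/eqP; rewrite eqn_leq; apply/andP; split; apply: rank_lub => I hI sI.
  by apply: rank_ub => //; rewrite subsetI sI hg.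
by apply: rank_ub => //; apply: subset_trans sI (subsetIl _ _).
Qed.

Lemma rankfun_del (T : finType) R (D : {set T}) :
  rankfun R -> rankfun (fun Z => R (Z :\: D)).
Proof.
move=> hR; split.
- move=> X; apply: leq_trans (rk_le hR _) _; apply: subset_leq_card; exact: subsetDl.
- move=> X Y sXY; apply: (rk_mono hR); by apply: setSD.
move=> X Y; rewrite setDUl.
have -> : (X :&: Y) :\: D = (X :\: D) :&: (Y :\: D).
  by apply/setP => z; rewrite !inE; case: (z \in D).
exact: (rk_sub hR).
Qed.

Lemma rankfun_con (T : finType) R (C : {set T}) :
  rankfun R -> rankfun (fun Z => R (Z :|: C) - R C).
Proof.
move=> hR; split.
- move=> X; have := rk_U hR X C; have := rk_le hR X; lia.
- move=> X Y sXY; have : R (X :|: C) <= R (Y :|: C) by apply: (rk_mono hR); apply: setSU.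
  lia.
move=> X Y.
have := rk_sub hR (X :|: C) (Y :|: C).
have -> : X :|: C :|: (Y :|: C) = X :|: Y :|: C.
  by apply/setP => z; rewrite !inE; case: (z \in X); case: (z \in Y); case: (z \in C).
have -> : (X :|: C) :&: (Y :|: C) = X :&: Y :|: C by rewrite setUIl.
have : R C <= R (X :|: C) by apply: (rk_mono hR); exact: subsetUr.
have : R C <= R (Y :|: C) by apply: (rk_mono hR); exact: subsetUr.
have : R C <= R (X :&: Y :|: C) by apply: (rk_mono hR); exact: subsetUr.
have : R C <= R (X :|: Y :|: C) by apply: (rk_mono hR); exact: subsetUr.
lia.
Qed.

Lemma rstruct_delete (T : finType) (M : mstruct T) R (D : {set T}) :
  rstruct M R -> rstruct (delete M D) (fun Z => R (Z :\: D)).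
Proof.
move=> hs; have [hR hI hg] := hs.
split; [exact: rankfun_del | | ].
  move=> I; rewrite /delete /= inE hI.
  apply/idP/idP.
    case/andP => /eqP h1 h2.
    have -> : I :\: D = I.
      apply/setP => z; rewrite inE; case zI: (z \in I); rewrite ?andbF // andbT.
      by have := subsetP h2 z zI; rewrite inE => /andP[].
    by rewrite h1.
  move/eqP => h.
  have c1 : #|I :\: D| <= #|I| by apply: subset_leq_card; apply: subsetDl.
  have c2 := rk_le hR (I :\: D).
  have eID : I :\: D = I by apply/eqP; rewrite eqEcard subsetDl /=; lia.
  rewrite eID in h; rewrite h eqxx /=.
  have hi : I \in indep M by rewrite hI h.
  rewrite -eID; apply: setSD; exact: hg.
by move=> I; rewrite /delete /= inE => /andP[_ h]; exact: h.
Qed.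

Lemma rstruct_contract (T : finType) (M : mstruct T) R (C : {set T}) :
  rstruct M R -> rstruct (contract M C) (fun Z => R (Z :|: C) - R C).
Proof.
move=> hs; have [hR hI hg] := hs.
have hgr := fun X => rstruct_ground X hs.
have hrk := fun X => rstruct_rank X hs.
split; [exact: rankfun_con | | ].
  move=> I; rewrite /contract /= inE !hrk.
  apply/idP/idP.
    by case/andP => _ /eqP ->; rewrite addnK.
  move/eqP => h.
  have hC : R C <= R (I :|: C) by apply: (rk_mono hR); exact: subsetUr.
  have h' : R (I :|: C) = #|I| + R C by lia.
  rewrite h' eqxx andbT.
  set I' := I :&: (ground M :\: C).
  have s1 : (I :|: C) :&: ground M \subset I' :|: C.
    apply/subsetP => z; rewrite !inE; by case: (z \in C); case: (z \in I); case: (z \in ground M).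
  have := rk_mono hR s1; rewrite -hgr.
  have := rk_U hR I' C; have := rk_le hR I'.
  have : #|I'| <= #|I| by apply: subset_leq_card; apply: subsetIl.
  move=> c0 c1 c2 c3.
  have : I' = I by apply/eqP; rewrite eqEcard subsetIl /=; lia.
  by move=> <-; apply: subsetIr.
by move=> I; rewrite /contract /= inE => /andP[h _].
Qed.

Lemma rstruct_dual (T : finType) (M : mstruct T) R (I : {set T}) :
  rstruct M R ->
  (I \in indep (dual M)) = (I \subset ground M) && (R (ground M :\: I) == R (ground M)).
Proof.
move=> hs; have [hR hI hg] := hs.
rewrite /dual /= inE; case sIE: (I \subset ground M) => //=.
apply/idP/idP.
  case/existsP => B /andP[/andP[hB hmax] dIB].
  have hBE := hg B hB.
  have eB : R B = #|B| by apply/eqP; rewrite -hI.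
  have e1 : R (B :|: (ground M :\: B)) = R B.
    apply: (rk_addall hR) => z zEB.
    move: hmax => /forallP /(_ z); rewrite zEB /= hI.
    have zB : z \notin B by move: zEB; rewrite inE => /andP[].
    rewrite cardsU1 zB.
    have := rk_add1 hR z B; have := rk_add1' hR z B; lia.
  rewrite setUD_sub // in e1.
  have sB : B \subset ground M :\: I.
    by rewrite subsetD hBE disjoint_sym.
  have := rk_mono hR sB; have := rk_mono hR (subsetDl (ground M) I).
  by rewrite e1 => h1 h2; apply/eqP; lia.
move/eqP => h.
have [B [sB hB1 hB2]] := rk_exind hR (ground M :\: I).
apply/existsP; exists B.
have hBi : B \in indep M by rewrite hI hB1.
have sBE : B \subset ground M by apply: subset_trans sB (subsetDl _ _).
rewrite /basis hBi /=; apply/andP; split.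
  apply/forallP => z; apply/implyP => zEB.
  have zB : z \notin B by move: zEB; rewrite inE => /andP[].
  have zE : z \in ground M by move: zEB; rewrite inE => /andP[].
  rewrite hI cardsU1 zB.
  have : R (z |: B) <= R (ground M) by apply: (rk_mono hR); rewrite subUset sub1set zE sBE.
  lia.
by move: sB; rewrite subsetD => /andP[_]; rewrite disjoint_sym.
Qed.

Ltac sets_fin w tac :=
  rewrite ?inE;
  repeat (match goal with |- context [w == ?c] => case: (w =P c) => [->|_] end);
  rewrite ?eqxx /=; tac;
  repeat (match goal with |- context [?a \in ?S] => case: (a \in S)
                        | |- context [?a == ?b] => case: (a == b) end);
  by [].

Ltac sets tac :=
  let w := fresh "w" in
  first [apply/setP => w | apply/subsetP => w ]; sets_fin w tac.

Lemma rk_cl1 U R (hR : @rankfun U R) (X Y : {set U}) (z : U) :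
  X \subset Y -> R X = R Y -> R (z |: X) = R (z |: Y).
Proof. by move=> s e; have := rk_cl hR [set z] s e; rewrite !(setUC _ [set z]). Qed.

Lemma rk_inc_mono U R (hR : @rankfun U R) (X Y : {set U}) (z : U) :
  X \subset Y -> R (z |: X) = R X -> R (z |: Y) = R Y.
Proof.
move=> s e.
have := rk_sub hR (z |: X) Y.
have -> : z |: X :|: Y = z |: Y.
  by rewrite -setUA (setUidPr s).
have : R X <= R ((z |: X) :&: Y).
  by apply: (rk_mono hR); rewrite subsetI subsetUr s.
have := rk_add1' hR z Y.
lia.
Qed.

Lemma rk_exch U R (hR : @rankfun U R) (X : {set U}) (z x : U) :
  R (z |: X) = (R X).+1 -> R (z |: (x |: X)) = R (x |: X) -> R (x |: (z |: X)) = R (z |: X).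
Proof.
move=> h1 h2; rewrite setUCA.
have := rk_add1 hR x X; have := rk_add1' hR x X.
have : R (z |: X) <= R (z |: (x |: X)) by apply: (rk_mono hR); apply: setUS; apply: subsetUr.
lia.
Qed.

Lemma rk_IL U R (hR : @rankfun U R) (S1 S2 : {set U}) (z : U) :
  R (S1 :|: S2) = #|S1 :|: S2| -> R (z |: S1) = R S1 -> R (z |: S2) = R S2 ->
  R (z |: (S1 :&: S2)) = R (S1 :&: S2).
Proof.
move=> hI h1 h2.
have e1 := rk_indsub hR hI (subsetUl S1 S2).
have e2 := rk_indsub hR hI (subsetUr S1 S2).
have e3 := rk_indsub hR hI (subset_trans (subsetIl S1 S2) (subsetUl S1 S2)).
have := rk_sub hR (z |: S1) (z |: S2).
have -> : z |: S1 :|: (z |: S2) = z |: (S1 :|: S2) by sets idtac.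
have -> : (z |: S1) :&: (z |: S2) = z |: (S1 :&: S2) by sets idtac.
have : R (S1 :|: S2) <= R (z |: (S1 :|: S2)) by apply: rk_add1'.
have : R (S1 :&: S2) <= R (z |: (S1 :&: S2)) by apply: rk_add1'.
have := cardsUI S1 S2.
lia.
Qed.

Lemma rk_drop U R (hR : @rankfun U R) (S : {set U}) (y : U) :
  y \in S -> R S <= (R (S :\ y)).+1.
Proof. by move=> yS; rewrite -{1}(setD1K yS); apply: rk_add1. Qed.

Lemma setU1_in (T : finType) (a : T) (A : {set T}) : a \in A -> a |: A = A.
Proof. by move=> aA; sets ltac:(rewrite ?aA). Qed.

Ltac keep_arith := repeat match goal with
 | H : ?T |- _ => lazymatch T with
     | is_true (_ <= _) => fail
     | @eq nat _ _ => fail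
     | ~ (@eq nat _ _) => fail
     | _ => clear H
   end
 end.
Ltac norm_eqs := repeat match goal with
  | H : @eq (Equality.sort _) ?a ?b |- _ =>
      let H' := fresh "He" in have H' : (a : nat) = (b : nat) := H; clear H
  | H : ~ (@eq (Equality.sort _) ?a ?b) |- _ =>
      let H' := fresh "He" in have H' : ~ ((a : nat) = (b : nat)) := H; clear H
  end.
Ltac lia' := intros; norm_eqs; keep_arith; lia.

Definition goodc (U : finType) (R : {set U} -> nat) (E : {set U}) (p f : U) (K : {set U}) : Prop :=
  [/\ K \subset E :\: [set p; f], R (p |: K) = (R K).+1, R (f |: K) = (R K).+1 &
      R (p |: (f |: K)) = (R K).+1].

Definition core_concl (U : finType) (R : {set U} -> nat) (E : {set U}) (p f : U) : Prop :=
  exists2 g, g \in E :\: [set p; f] &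
    ((R [set f; g] = 1 /\ R [set f] = 1 /\ R [set g] = 1) \/ R (E :\: [set f; g]) < R E).

Lemma rk_same U R (hR : @rankfun U R) (X Y : {set U}) (z : U) :
  (X \subset Y \/ Y \subset X) -> R X = R Y -> R (z |: X) = R (z |: Y).
Proof.
case=> s e; first exact: rk_cl1.
by apply/esym; apply: rk_cl1.
Qed.

Lemma good_eq U R (hR : @rankfun U R) E p f (K K' : {set U}) :
  goodc R E p f K -> K' \subset E :\: [set p; f] -> (K \subset K' \/ K' \subset K) ->
  R K' = R K -> goodc R E p f K'.
Proof.
case=> _ g1 g2 g3 s o e.
have o' : K' \subset K \/ K \subset K' by case: o; [right|left].
have hp := rk_same hR p o' e.
have hf := rk_same hR f o' e.
have o2 : f |: K' \subset f |: K \/ f |: K \subset f |: K'.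
  by case: o' => h; [left|right]; apply: setUS.
have hpf := rk_same hR p o2 hf.
by split => //; rewrite ?hp ?hf ?hpf e.
Qed.

Lemma con_good U R (hR : @rankfun U R) E (p f y : U) (K : {set U}) :
  y \in E :\: [set p; f] -> y \notin K ->
  (goodc (fun Z => R (Z :|: [set y]) - R [set y]) (E :\ y) p f K <-> goodc R E p f (y |: K)).
Proof.
move=> yB yK.
have e1 : (p |: K) :|: [set y] = p |: (y |: K) by sets idtac.
have e2 : K :|: [set y] = y |: K by sets idtac.
have e3 : (f |: K) :|: [set y] = f |: (y |: K) by sets idtac.
have e4 : (p |: (f |: K)) :|: [set y] = p |: (f |: (y |: K)) by sets idtac.
have m1 : R [set y] <= R (y |: K) by apply: (rk_mono hR); apply: subsetUl.
have m2 : R (y |: K) <= R (p |: (y |: K)) by apply: rk_add1'.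
have m3 : R (y |: K) <= R (f |: (y |: K)) by apply: rk_add1'.
have m4 : R (f |: (y |: K)) <= R (p |: (f |: (y |: K))) by apply: rk_add1'.
have hs : (K \subset (E :\ y) :\: [set p; f]) = (y |: K \subset E :\: [set p; f]).
  rewrite subUset sub1set yB /=.
  apply/idP/idP => /subsetP h; apply/subsetP => z zK; have := h z zK; rewrite !inE.
    by case/andP => -> /andP[_ ->].
  case/andP => -> ->; rewrite andbT /=; apply/negP => /eqP ez; by rewrite -ez zK in yK.
rewrite /goodc e1 e2 e3 e4 hs.
split; case=> s a b c; split => //; lia'.
Qed.

Lemma core_step (U : finType) (p f : U) (R : {set U} -> nat) (E Ks : {set U}) :
  p != f -> rankfun R -> p \in E -> f \in E -> goodc R E p f Ks ->
  (forall K, goodc R E p f K -> K = Ks) ->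
  (exists x, x \in E :\: [set p; f]) ->
  (forall R' (E' Ks' : {set U}), rankfun R' -> p \in E' -> f \in E' -> #|Ks'| < #|Ks| ->
      goodc R' E' p f Ks' -> (forall K, goodc R' E' p f K -> K = Ks') ->
      (exists x, x \in E' :\: [set p; f]) -> core_concl R' E' p f) ->
  core_concl R E p f.
Proof.
move=> pf hR pE fE hg hu hne IH.
have [sKs g1 g2 g3] := hg.
set B' := E :\: [set p; f].
have inB : forall z, z \in B' -> [/\ z != p, z != f & z \in E].
  by move=> z; rewrite !inE negb_or => /andP[/andP[-> ->] ->].
have pKs : (p \in Ks) = false.
  by apply/negbTE/negP => /(subsetP sKs) /inB []; rewrite eqxx.
have fKs : (f \in Ks) = false.
  by apply/negbTE/negP => /(subsetP sKs) /inB [_]; rewrite eqxx.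
have pf' : (p == f) = false by apply/negbTE.
have fp' : (f == p) = false by rewrite eq_sym.
have notKs : forall K, goodc R E p f K -> K != Ks -> False.
  by move=> K h; rewrite (hu K h) eqxx.
have KsE : Ks \subset E by apply: subset_trans sKs (subsetDl _ _).
set k := #|Ks|.
have hKs : R Ks = k.
  have [I [sI hI1 hI2]] := rk_exind hR Ks.
  case: (eqVneq I Ks) => [eI|nI]; first by rewrite -hI2 hI1 eI.
  have : I \proper Ks by rewrite properEneq nI sI.
  case/properP => _ [y yKs yI].
  exfalso; apply: (notKs (Ks :\ y)).
    apply: good_eq hg _ _ _ => //.
    - by apply: subset_trans (subsetDl _ _) sKs.
    - by right; apply: subsetDl.
    - have : R I <= R (Ks :\ y).
        apply: (rk_mono hR); apply/subsetP => z zI; rewrite !inE (subsetP sI z zI) andbT.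
        by apply/negP => /eqP ez; rewrite -ez zI in yI.
      have : R (Ks :\ y) <= R Ks by apply: (rk_mono hR); apply: subsetDl.
      lia'.
  apply/negP => /eqP e; by move: yKs; rewrite -e !inE eqxx.
have indK : forall S : {set U}, S \subset Ks -> R S = #|S|.
  by move=> S sS; exact: (rk_indsub hR hKs sS).
have Rf1 : R [set f] = 1.
  have := rk_U hR [set f] Ks; rewrite -/(f |: Ks) g2 => h.
  have := rk1 hR f; lia'.
have B'Ks : forall x, x \in B' -> x \notin Ks -> R (x |: Ks) = k.+1.
  move=> x xB xK.
  have := rk_add1 hR x Ks; have := rk_add1' hR x Ks; rewrite hKs => h1 h2.
  case: (ltnP k (R (x |: Ks))) => h3; first lia'.
  exfalso; apply: (notKs (x |: Ks)).
    apply: good_eq hg _ _ _ => //.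
    - by rewrite subUset sub1set xB sKs.
    - by left; apply: subsetUr.
    - lia'.
  apply/negP => /eqP e; by move: xK; rewrite -e !inE eqxx.
have Rx1 : forall x, x \in B' -> x \notin Ks -> R [set x] = 1.
  move=> x xB xK; have := B'Ks x xB xK; have := rk_U hR [set x] Ks; rewrite -/(x |: Ks) hKs.
  have := rk1 hR x; lia'.
have hpK : R (p |: Ks) = k.+1 by rewrite g1 hKs.
have F4 : forall x, x \in B' -> x \notin Ks -> R (x |: (p |: Ks)) = k.+1.
  move=> x xB xK.
  have h1 := B'Ks x xB xK.
  have a1 := rk_add1 hR x (p |: Ks); have a2 := rk_add1' hR x (p |: Ks).
  rewrite hpK in a1 a2.
  case: (leqP (R (x |: (p |: Ks))) k.+1) => a3; first lia'.
  exfalso.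
  have fcl : R (f |: (x |: (p |: Ks))) = R (x |: (p |: Ks)).
    apply: (rk_inc_mono hR (subsetUr [set x] (p |: Ks))).
    by rewrite setUCA g3 hKs hpK.
  case: (leqP (R (f |: (x |: Ks))) k.+1) => a4.
    have e1 : R (x |: (f |: Ks)) = R (f |: Ks).
      rewrite setUCA g2 hKs; have := rk_add1' hR f (x |: Ks); rewrite h1; lia'.
    have e2 : R (x |: (p |: (f |: Ks))) = R (p |: (f |: Ks)).
      exact: (rk_inc_mono hR (subsetUr [set p] (f |: Ks)) e1).
    have : R (x |: (p |: Ks)) <= R (x |: (p |: (f |: Ks))).
      by apply: (rk_mono hR); apply: setUS; apply: setUS; apply: subsetUr.
    rewrite e2 g3 hKs; lia'.
  apply: (notKs (x |: Ks)).
    split.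
    - by rewrite subUset sub1set xB sKs.
    - rewrite setUCA h1; lia'.
    - have := rk_add1 hR f (x |: Ks); rewrite h1; lia'.
    - have -> : p |: (f |: (x |: Ks)) = f |: (x |: (p |: Ks)) by sets idtac.
      rewrite fcl h1; lia'.
  apply/negP => /eqP e; by move: xK; rewrite -e !inE eqxx.
have F5 : R E = k.+1.
  have sE : p |: Ks \subset E by rewrite subUset sub1set pE KsE.
  have hall : forall z, z \in E -> R (z |: (p |: Ks)) = R (p |: Ks).
    move=> z zE.
    case: (boolP (z \in p |: Ks)) => zpK; first by rewrite (setU1_in zpK).
    case: (eqVneq z f) => [->|zf].
      by rewrite setUCA g3 g1.
    have zK : z \notin Ks by move: zpK; rewrite !inE negb_or => /andP[].
    have zp : z != p by move: zpK; rewrite !inE negb_or => /andP[].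
    have zB : z \in B' by rewrite !inE zE andbT negb_or zp zf.
    by rewrite F4 // g1 hKs.
  have := rk_addall hR (X := p |: Ks) (Z := E) hall.
  by rewrite (setUidPr sE) g1 hKs.
have hW : forall y, y \in Ks -> R (Ks :\ y) = k.-1.
  move=> y yK; rewrite indK ?subsetDl //.
  have := cardsD1 y Ks; rewrite yK /= -/k; lia'.
have hpW : forall y, y \in Ks -> R (p |: (Ks :\ y)) = k.
  move=> y yK.
  have a1 := rk_add1 hR p (Ks :\ y); rewrite hW // in a1.
  have : R (p |: Ks) <= R (y |: (p |: (Ks :\ y))).
    by apply: (rk_mono hR); sets idtac.
  have := rk_add1 hR y (p |: (Ks :\ y)).
  have : 0 < k by apply/card_gt0P; exists y.
  rewrite hpK; lia'.
have F2 : forall y, y \in Ks -> R (p |: (f |: (Ks :\ y))) = k.+1.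
  move=> y yK.
  have kpos : 0 < k by apply/card_gt0P; exists y.
  have w1 := hW y yK; have w2 := hpW y yK.
  have a1 : R (f |: (Ks :\ y)) <= k.
    have := rk_add1 hR f (Ks :\ y); rewrite w1; lia'.
  have a2 : R (f |: Ks) <= R (y |: (f |: (Ks :\ y))).
    by apply: (rk_mono hR); sets idtac.
  have a3 := rk_add1 hR y (f |: (Ks :\ y)).
  have a4 : R (p |: (f |: Ks)) <= R (y |: (p |: (f |: (Ks :\ y)))).
    by apply: (rk_mono hR); sets idtac.
  have a5 := rk_add1 hR y (p |: (f |: (Ks :\ y))).
  have a6 : R (p |: (f |: (Ks :\ y))) <= R (p |: (f |: Ks)).
    by apply: (rk_mono hR); sets idtac.
  rewrite g2 hKs in a2; rewrite g3 hKs in a4 a6.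
  case: (leqP (R (p |: (f |: (Ks :\ y)))) k) => a7; last lia'.
  exfalso; apply: (notKs (Ks :\ y)).
    split.
    - by apply: subset_trans (subsetDl _ _) sKs.
    - lia'.
    - lia'.
    - lia'.
  apply/negP => /eqP e; by move: yK; rewrite -e !inE eqxx.
have Dlem : forall x y, x \in B' -> x \notin Ks -> y \in Ks ->
    R (x |: (Ks :\ y)) = k /\
    (R (x |: (p |: (Ks :\ y))) = k \/ R (f |: (x |: (Ks :\ y))) = k).
  move=> x y xB xK yK.
  have kpos : 0 < k by apply/card_gt0P; exists y.
  have w1 := hW y yK.
  have h1 := B'Ks x xB xK.
  have a1 : R (x |: Ks) <= R (y |: (x |: (Ks :\ y))) by apply: (rk_mono hR); sets idtac.
  have a2 := rk_add1 hR y (x |: (Ks :\ y)).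
  have a3 := rk_add1 hR x (Ks :\ y).
  have ex : R (x |: (Ks :\ y)) = k by lia'.
  split => //.
  have b1 := rk_add1 hR p (x |: (Ks :\ y)).
  have b2 := rk_add1' hR p (x |: (Ks :\ y)).
  have c1 := rk_add1 hR f (x |: (Ks :\ y)).
  have c2 := rk_add1' hR f (x |: (Ks :\ y)).
  rewrite setUCA.
  case: (leqP (R (p |: (x |: (Ks :\ y)))) k) => b3; first by left; lia'.
  case: (leqP (R (f |: (x |: (Ks :\ y)))) k) => c3; first by right; lia'.
  exfalso; apply: (notKs (x |: (Ks :\ y))).
    have [xp xf xE] := inB x xB.
    have d1 : R (p |: (f |: (x |: (Ks :\ y)))) <= R E.
      apply: (rk_mono hR); rewrite !subUset !sub1set pE fE xE /=.
      by apply: subset_trans (subsetDl _ _) KsE.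
    have d2 : R (f |: (x |: (Ks :\ y))) <= R (p |: (f |: (x |: (Ks :\ y)))) by apply: rk_add1'.
    split.
    - rewrite subUset sub1set xB /=; by apply: subset_trans (subsetDl _ _) sKs.
    - lia'.
    - lia'.
    - lia'.
  apply/negP => /eqP e; by move: xK; rewrite -e !inE eqxx.
have Ser : forall y, y \in Ks ->
    (forall x, x \in B' -> x \notin Ks -> R (x |: (p |: (Ks :\ y))) = k) -> core_concl R E p f.
  move=> y yK hx; exists y; first by apply: (subsetP sKs).
  right.
  have kpos : 0 < k by apply/card_gt0P; exists y.
  have RX := hpW y yK.
  have hall : forall z, z \in E :\: [set f; y] -> R (z |: (p |: (Ks :\ y))) = R (p |: (Ks :\ y)).
    move=> z; rewrite !inE negb_or => /andP[/andP[zf zy] zE].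
    case: (boolP (z \in p |: (Ks :\ y))) => zX; first by rewrite (setU1_in zX).
    have zp : z != p by apply: contraNneq zX => ->; rewrite !inE eqxx.
    have zK : z \notin Ks by apply: contraNN zX => zK; rewrite !inE zK zy orbT.
    have zB : z \in B' by rewrite !inE negb_or zp zf zE.
    by rewrite hx // RX.
  have := rk_addall hR (X := p |: (Ks :\ y)) (Z := E :\: [set f; y]) hall.
  have : R (E :\: [set f; y]) <= R ((p |: (Ks :\ y)) :|: (E :\: [set f; y])).
    by apply: (rk_mono hR); apply: subsetUr.
  rewrite F5 RX; lia'.
have Step : forall y y', y \in Ks -> y' \in Ks -> y != y' ->
    core_concl R E p f \/
    exists x, [/\ x \in B', x \notin Ks, R (f |: (x |: [set y])) = R (x |: [set y]),
                R (x |: [set y]) = 2 & R [set f; x] = 2 /\ R (x |: (p |: (Ks :\ y))) = k].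
  move=> y y' yK y'K yy'.
  have yB := subsetP sKs y yK.
  have [yp yf yE] := inB y yB.
  have y'B := subsetP sKs y' y'K.
  have [y'p y'f y'E] := inB y' y'B.
  pose R1 := fun Z : {set U} => R (Z :|: [set y]) - R [set y].
  have hR1 : rankfun R1 := rankfun_con [set y] hR.
  have Ry : R [set y] = 1 by rewrite indK ?sub1set // cards1.
  have yKs' : y \notin Ks :\ y by rewrite !inE eqxx.
  have good1 : goodc R1 (E :\ y) p f (Ks :\ y).
    by apply/(con_good hR yB yKs'); rewrite setD1K.
  have uniq1 : forall K, goodc R1 (E :\ y) p f K -> K = Ks :\ y.
    move=> K hK.
    have yK' : y \notin K.
      case: hK => sK _ _ _; apply/negP => yK0; have := subsetP sK y yK0.
      by rewrite !inE eqxx /= andbF.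
    have e := hu _ ((con_good hR yB yK').1 hK).
    by rewrite -e setU1K.
  have ne1 : exists x, x \in (E :\ y) :\: [set p; f].
    by exists y'; rewrite !inE negb_or y'p y'f y'E eq_sym yy'.
  have pE1 : p \in E :\ y by rewrite !inE pE andbT eq_sym.
  have fE1 : f \in E :\ y by rewrite !inE fE andbT eq_sym.
  have lt1 : #|Ks :\ y| < #|Ks| by rewrite (cardsD1 y Ks) yK.
  have [g gB1 [[h1 [h2 h3]]|hs]] := IH R1 (E :\ y) (Ks :\ y) hR1 pE1 fE1 lt1 good1 uniq1 ne1.
    have gy : g != y by move: gB1; rewrite !inE => /andP[_ /andP[]].
    have gB : g \in B' by move: gB1; rewrite !inE => /andP[-> /andP[_ ->]].
    rewrite /R1 Ry in h1 h2 h3.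
    have e1 : [set f; g] :|: [set y] = f |: (g |: [set y]) by sets idtac.
    rewrite e1 in h1.
    have e3 : [set f] :|: [set y] = f |: [set y] by [].
    case: (boolP (g \in Ks)) => gK.
      exfalso.
      have hc : R (f |: (g |: [set y])) = R (g |: [set y]) by lia'.
      have := rk_inc_mono hR (Y := Ks) (z := f) _ hc.
      by rewrite subUset !sub1set gK yK g2 => /(_ isT); lia'.
    case: (eqVneq (R [set f; g]) 1) => hfg.
      left; exists g => //; left; split => //; split => //; exact: Rx1.
    right; exists g; split => //; last split.
    - lia'.
    - lia'.
    - have := rk_le hR [set f; g]; have := rk_mono hR (subsetUl [set f] [set g]).
      rewrite cards2 Rf1; move/eqP: hfg; case: (f != g) => /=; lia'.
    - have [ex [h|h]] := Dlem g y gB gK yK; first done.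
      exfalso.
      have i1 : (g |: (Ks :\ y)) :|: (g |: [set y]) = g |: Ks by sets ltac:(rewrite ?yK).
      have i2 : (g |: (Ks :\ y)) :&: (g |: [set y]) = [set g] by sets idtac.
      have hI : R ((g |: (Ks :\ y)) :|: (g |: [set y])) = #|(g |: (Ks :\ y)) :|: (g |: [set y])|.
        by rewrite i1 B'Ks // cardsU1 gK.
      have hc : R (f |: (g |: [set y])) = R (g |: [set y]) by lia'.
      have := rk_IL hR (z := f) hI; rewrite h ex => /(_ erefl hc); rewrite i2 Rx1 //.
      by move=> hh; move: hfg; rewrite -/(f |: [set g]) hh eqxx.
  left; exists g.
    by move: gB1; rewrite !inE => /andP[-> /andP[_ ->]].
  right.
  have gy : (y == g) = false by move: gB1; rewrite !inE => /andP[_ /andP[hh _]]; rewrite eq_sym; apply/negbTE.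
  have yf' : (y == f) = false by apply/negbTE.
  have yE' : (y \in E) = true by [].
  have gy2 : (g == y) = false by rewrite eq_sym.
  have fy2 : (f == y) = false by rewrite eq_sym.
  have e1 : ((E :\ y) :\: [set f; g]) :|: [set y] = E :\: [set f; g].
    by sets ltac:(rewrite ?gy ?yf' ?yE' ?gy2 ?fy2).
  have e2 : (E :\ y) :|: [set y] = E by sets ltac:(rewrite ?yE').
  move: hs; rewrite /R1 e1 e2; lia'.
case: (posnP k) => [k0|kpos].
  have Ks0 : Ks = set0 by apply/eqP; rewrite -cards_eq0; apply/eqP.
  case: hne => x xB.
  have xK : x \notin Ks by rewrite Ks0 inE.
  exists x => //; left.
  split; [|split] => //; last exact: Rx1.
  have h4 := F4 x xB xK; rewrite Ks0 k0 setU0 in h4.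
  have h3 := g3; rewrite Ks0 setU0 (rk0 hR) in h3.
  have h1 := g1; rewrite Ks0 setU0 (rk0 hR) in h1.
  have e : R (f |: [set p]) = R [set p] by rewrite setUC h3 h1.
  have e' := rk_inc_mono hR (subsetUr [set x] [set p]) e.
  have : R [set f; x] <= R (f |: (x |: [set p])).
    by apply: (rk_mono hR); sets idtac.
  have := rk_mono hR (subsetUl [set f] [set x]).
  rewrite e' h4 Rf1; lia'.
have [y1 y1K] : exists y1, y1 \in Ks by apply/card_gt0P.
case: (eqVneq k 1) => [k1|kn1].
  case: (boolP [forall x, (x \in B') ==> (x \notin Ks) ==> (R (x |: (p |: (Ks :\ y1))) == k)]).
    move/forallP => hx; apply: (Ser y1 y1K) => x xB xK.
    by apply/eqP; have := hx x; rewrite xB xK.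
  rewrite negb_forall => /existsP [x]; rewrite negb_imply => /andP[xB]; rewrite negb_imply => /andP[xK hne'].
  have [ex [h|h]] := Dlem x y1 xB xK y1K; first by rewrite h eqxx in hne'.
  have K0 : Ks :\ y1 = set0.
    apply/eqP; rewrite -cards_eq0; have := cardsD1 y1 Ks; rewrite y1K -/k k1; lia'.
  rewrite K0 setU0 k1 in h.
  exists x => //; left; split => //; split => //; exact: Rx1.
have k2 : 1 < k by move/eqP: kn1; lia'.
have [y2 y2K y21] : exists2 y2, y2 \in Ks & y2 != y1.
  have : 0 < #|Ks :\ y1| by have := cardsD1 y1 Ks; rewrite y1K -/k; lia'.
  case/card_gt0P => y2; rewrite !inE => /andP[h1 h2]; by exists y2.
have y12 : y1 != y2 by rewrite eq_sym.
have Hcl : forall y y' x, y \in Ks -> y' \in Ks -> y != y' -> x \in B' -> x \notin Ks ->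
    R (f |: (x |: [set y])) = R (x |: [set y]) -> R (x |: (p |: (Ks :\ y))) = k ->
    R (y' |: (x |: (p |: (Ks :\: [set y; y'])))) = R (x |: (p |: (Ks :\: [set y; y']))).
  move=> y y' x yK y'K yy' xB xK hf hp.
  have yy'b : (y == y') = false by apply/negbTE.
  have y'yb : (y' == y) = false by rewrite eq_sym.
  have [xp xf xE] := inB x xB.
  have pxb : (p == x) = false by rewrite eq_sym; apply/negbTE.
  have yxb : (y == x) = false by apply/negbTE; apply: contraNneq xK => <-.
  have y'xb : (y' == x) = false by apply/negbTE; apply: contraNneq xK => <-.
  have xyb : (x == y) = false by rewrite eq_sym.
  have xy'b : (x == y') = false by rewrite eq_sym.
  have pyb : (p == y) = false by apply/negbTE; apply: contraFneq pKs => ->.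
  have py'b : (p == y') = false by apply/negbTE; apply: contraFneq pKs => ->.
  have fyb : (f == y) = false by apply/negbTE; apply: contraFneq fKs => ->.
  have fy'b : (f == y') = false by apply/negbTE; apply: contraFneq fKs => ->.
  have eKI : Ks :&: [set y; y'] = [set y; y'] by sets ltac:(rewrite ?yK ?y'K).
  have cQ : #|Ks :\: [set y; y']| = k - 2 by rewrite cardsD eKI cards2 yy'.
  have pQ : p \notin Ks :\: [set y; y'] by rewrite !inE pKs andbF.
  have RpQ : R (p |: (Ks :\: [set y; y'])) = k.-1.
    have a1 := rk_le hR (p |: (Ks :\: [set y; y'])); rewrite cardsU1 pQ cQ in a1.
    have a2 : R (p |: Ks) <= R (y |: (y' |: (p |: (Ks :\: [set y; y'])))).
      by apply: (rk_mono hR); sets idtac.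
    have a3 := rk_add1 hR y (y' |: (p |: (Ks :\: [set y; y']))).
    have a4 := rk_add1 hR y' (p |: (Ks :\: [set y; y'])).
    rewrite hpK in a2; lia'.
  have Rpy' := hpW y' y'K.
  have b1 := rk_add1 hR x (p |: (Ks :\: [set y; y'])).
  have b2 := rk_add1' hR x (p |: (Ks :\: [set y; y'])).
  have xcl : R (x |: (p |: (Ks :\: [set y; y']))) = k.
    case: (leqP k (R (x |: (p |: (Ks :\: [set y; y']))))) => c1; first lia'.
    exfalso.
    have e : R (x |: (p |: (Ks :\: [set y; y']))) = R (p |: (Ks :\: [set y; y'])) by lia'.
    have s1 : p |: (Ks :\: [set y; y']) \subset p |: (Ks :\ y') by sets idtac.
    have e2 := rk_inc_mono hR s1 e.
    have s2 : x |: [set y] \subset x |: (p |: (Ks :\ y')) by sets ltac:(rewrite ?yK ?yy'b).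
    have e3 := rk_inc_mono hR s2 hf.
    have s3 : p |: (f |: (Ks :\ y')) \subset f |: (x |: (p |: (Ks :\ y'))) by sets idtac.
    have := rk_mono hR s3; rewrite e3 e2 Rpy' F2 //; lia'.
  have s4 : y' |: (x |: (p |: (Ks :\: [set y; y']))) \subset x |: (p |: (Ks :\ y)).
    by sets ltac:(rewrite ?y'K ?y'yb).
  have := rk_mono hR s4; rewrite hp xcl.
  have := rk_add1' hR y' (x |: (p |: (Ks :\: [set y; y']))); rewrite xcl; lia'.
have [|[x1 [x1B x1K hf1 hx1 [hfx1 hp1]]]] := Step y1 y2 y1K y2K y12; first done.
have [|[x2 [x2B x2K hf2 hx2 [hfx2 hp2]]]] := Step y2 y1 y2K y1K y21; first done.
have y12b : (y1 == y2) = false by apply/negbTE.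
have y21b : (y2 == y1) = false by apply/negbTE.
case: (eqVneq x1 x2) => [ex|nx].
  exfalso; rewrite -ex in hf2.
  have sI : (x1 |: [set y1]) :|: (x1 |: [set y2]) \subset x1 |: Ks.
    by sets ltac:(rewrite ?y1K ?y2K).
  have hI : R ((x1 |: [set y1]) :|: (x1 |: [set y2])) = #|(x1 |: [set y1]) :|: (x1 |: [set y2])|.
    apply: (rk_indsub hR _ sI); by rewrite B'Ks // cardsU1 x1K.
  have i2 : (x1 |: [set y1]) :&: (x1 |: [set y2]) = [set x1] by sets ltac:(rewrite ?y12b ?y21b).
  have := rk_IL hR hI hf1 hf2; rewrite i2 Rx1 // => hh.
  by move: hfx1; rewrite -/(f |: [set x1]) hh.
have eQ : Ks :\: [set y2; y1] = Ks :\: [set y1; y2] by rewrite [[set y2; y1]]setUC.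
have cl2 := Hcl y1 y2 x1 y1K y2K y12 x1B x1K hf1 hp1.
have cl1 := Hcl y2 y1 x2 y2K y1K y21 x2B x2K hf2 hp2.
rewrite eQ in cl1.
set Q := Ks :\: [set y1; y2] in cl1 cl2.
set K := x1 |: (x2 |: Q).
have [x1p x1f x1E] := inB x1 x1B.
have [x2p x2f x2E] := inB x2 x2B.
have QKs : Q \subset Ks by apply: subsetDl.
have KB : K \subset B' by rewrite !subUset !sub1set x1B x2B (subset_trans QKs sKs).
have KE : K \subset E by apply: subset_trans KB (subsetDl _ _).
have pKE : p |: K \subset E by apply/subsetP => z; rewrite in_setU1 => /orP[/eqP->|zK]; [exact: pE | exact: (subsetP KE)].
have pfKE : p |: (f |: K) \subset E by apply/subsetP => z; rewrite in_setU1 => /orP[/eqP->|]; [exact: pE | rewrite in_setU1 => /orP[/eqP->|zK]; [exact: fE | exact: (subsetP KE)]].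
have s7 : x1 |: (p |: Q) \subset p |: K by sets idtac.
have s8 : x2 |: (p |: Q) \subset p |: K by sets idtac.
have c2' : R (y2 |: (p |: K)) = R (p |: K) by exact: (rk_inc_mono hR s7 cl2).
have c1' : R (y1 |: (p |: K)) = R (p |: K) by exact: (rk_inc_mono hR s8 cl1).
have hall : forall z, z \in [set y1; y2] -> R (z |: (p |: K)) = R (p |: K).
  by move=> z /set2P [->|->].
have := rk_addall hR (X := p |: K) (Z := [set y1; y2]) hall.
have s5 : p |: Ks \subset (p |: K) :|: [set y1; y2] by sets idtac.
have := rk_mono hR s5; rewrite hpK => d1 d2.
have d3 := rk_mono hR pKE; rewrite F5 in d3.
have hpK2 : R (p |: K) = k.+1 by lia'.
have cK : #|K| <= k.
  have eKI : Ks :&: [set y1; y2] = [set y1; y2] by sets ltac:(rewrite ?y1K ?y2K).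
  have cQ : #|Q| = k - 2 by rewrite /Q cardsD eKI cards2 y12.
  rewrite /K !cardsU1 cQ; case: (x1 \notin _); case: (x2 \notin _) => /=; lia'.
have RK : R K = k.
  have := rk_add1 hR p K; have := rk_le hR K; lia'.
have RpfK : R (p |: (f |: K)) = k.+1.
  have := rk_mono hR pfKE; rewrite F5.
  have : R (p |: K) <= R (p |: (f |: K)) by apply: (rk_mono hR); sets idtac.
  lia'.
have RfK : R (f |: K) = k.+1.
  case: (leqP k.+1 (R (f |: K))) => e0; first by have := rk_add1 hR f K; lia'.
  exfalso.
  have hf1' : R (f |: (y1 |: [set x1])) = R (y1 |: [set x1]) by rewrite (setUC [set y1] [set x1]).
  have hf2' : R (f |: (y2 |: [set x2])) = R (y2 |: [set x2]) by rewrite (setUC [set y2] [set x2]).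
  have ex1 := rk_exch hR (X := [set x1]) (z := f) (x := y1).
  have ex2 := rk_exch hR (X := [set x2]) (z := f) (x := y2).
  rewrite Rx1 // hfx1 in ex1; rewrite Rx1 // hfx2 in ex2.
  have ey1 : R (y1 |: (f |: [set x1])) = R (f |: [set x1]) by rewrite (ex1 erefl hf1') hfx1.
  have ey2 : R (y2 |: (f |: [set x2])) = R (f |: [set x2]) by rewrite (ex2 erefl hf2') hfx2.
  have m1 : f |: [set x1] \subset f |: K by sets idtac.
  have m2 : f |: [set x2] \subset f |: K by sets idtac.
  have c1 := rk_inc_mono hR m1 ey1.
  have c2 := rk_inc_mono hR m2 ey2.
  have hall' : forall z, z \in [set y1; y2] -> R (z |: (f |: K)) = R (f |: K).
    by move=> z /set2P [->|->].
  have := rk_addall hR (X := f |: K) (Z := [set y1; y2]) hall'.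
  have s6 : f |: Ks \subset (f |: K) :|: [set y1; y2] by sets idtac.
  have := rk_mono hR s6; rewrite g2 hKs; lia'.
exfalso; apply: (notKs K).
  split => //; lia'.
apply/negP => /eqP e; by move: x1K; rewrite -e !inE eqxx.
Qed.

Lemma core (U : finType) (p f : U) (R : {set U} -> nat) (E Ks : {set U}) :
  p != f -> rankfun R -> p \in E -> f \in E -> goodc R E p f Ks ->
  (forall K, goodc R E p f K -> K = Ks) ->
  (exists x, x \in E :\: [set p; f]) -> core_concl R E p f.
Proof.
move=> pf; move: {2}#|Ks| (leqnn #|Ks|) => n.
elim: n R E Ks => [|n IH] R E Ks hn hR pE fE hg hu hne.
  apply: (core_step (Ks := Ks)) => // R' E' Ks' _ _ _ hlt; lia'.
apply: (core_step (Ks := Ks)) => // R' E' Ks' hR' pE' fE' hlt.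
apply: IH => //; lia'.
Qed.

Ltac bruteall := repeat (match goal with
   | |- context [?a \in ?S] => case: (a \in S)
   | |- context [?a == ?b] => case: (a == b) end); by [].

Lemma subimp (T : finType) (X Y : {set T}) : X \subset Y -> forall z, (z \in X) ==> (z \in Y).
Proof. by move=> s z; apply/implyP; apply: (subsetP s). Qed.

Lemma disimp (T : finType) (X Y : {set T}) : [disjoint X & Y] -> forall z, ~~ ((z \in X) && (z \in Y)).
Proof. by move=> d z; apply/negP => /andP[h1 h2]; rewrite (disjointFr d h1) in h2. Qed.

Lemma kmono U R (hR : @rankfun U R) (Y Y' K : {set U}) :
  Y \subset Y' -> R Y + R (Y' :|: K) <= R Y' + R (Y :|: K).
Proof.
move=> s; have := rk_sub hR Y' (Y :|: K).
have -> : Y' :|: (Y :|: K) = Y' :|: K by rewrite setUA (setUidPl s).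
have : R Y <= R (Y' :&: (Y :|: K)) by apply: (rk_mono hR); rewrite subsetI s subsetUl.
lia'.
Qed.

Lemma kmono2 U R (hR : @rankfun U R) (Y K K' : {set U}) :
  K \subset K' -> R K + R (Y :|: K') <= R K' + R (Y :|: K).
Proof. by move=> s; rewrite ![Y :|: _]setUC; apply: kmono. Qed.

Lemma kbound U R (hR : @rankfun U R) (A B Y K : {set U}) :
  Y \subset A -> K \subset B -> R A + R B <= R (A :|: B) + 1 -> R Y + R K <= R (Y :|: K) + 1.
Proof.
move=> sY sK h.
have := kmono hR K sY; have := kmono2 hR A sK.
have := rk_mono hR (setUS A sK).
lia'.
Qed.

Lemma K2lem U R (hR : @rankfun U R) (A B Y K : {set U}) :
  [disjoint A & B] -> Y \subset A -> K \subset B -> R A + R B <= R (A :|: B) + 1 ->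
  R Y + R B = R (Y :|: B) + 1 -> R A + R K = R (A :|: K) + 1 -> R Y + R K = R (Y :|: K) + 1.
Proof.
move=> dAB sY sK hAB hY hK.
have hb := kbound hR sY sK hAB.
have [Y' [sY' hY'1 hY'2]] := rk_exind hR Y.
have [Ia [sIa1 sIa2 hIa1 hIa2]] := rk_extend hR (subset_trans sY' sY) hY'1.
have [K' [sK' hK'1 hK'2]] := rk_exind hR K.
have [Ib [sIb1 sIb2 hIb1 hIb2]] := rk_extend hR (subset_trans sK' sK) hK'1.
have d := disimp dAB.
have i1 := subimp sY'; have i2 := subimp sIa1; have i3 := subimp sIa2.
have i4 := subimp sK'; have i5 := subimp sIb1; have i6 := subimp sIb2.
have i7 := subimp sY; have i8 := subimp sK.
have eI : (Y' :|: Ib) :&: (Ia :|: K') = Y' :|: K'.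
  apply/setP => z; move: (d z) (i1 z) (i2 z) (i3 z) (i4 z) (i5 z) (i6 z); rewrite !inE; bruteall.
have eU : (Y' :|: Ib) :|: (Ia :|: K') = Ia :|: Ib.
  apply/setP => z; move: (d z) (i1 z) (i2 z) (i3 z) (i4 z) (i5 z) (i6 z); rewrite !inE; bruteall.
have c0 : forall X Z : {set U}, (forall z, ~~ ((z \in X) && (z \in Z))) -> #|X :|: Z| = #|X| + #|Z|.
  move=> X Z h; rewrite -cardsUI.
  have -> : X :&: Z = set0 by apply/setP => z; move: (h z); rewrite !inE; bruteall.
  by rewrite cards0 addn0.
have c1 : #|Y' :|: Ib| = #|Y'| + #|Ib|.
  apply: c0 => z; move: (d z) (i1 z) (i2 z) (i3 z) (i4 z) (i5 z) (i6 z); bruteall.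
have c2 : #|Ia :|: K'| = #|Ia| + #|K'|.
  apply: c0 => z; move: (d z) (i1 z) (i2 z) (i3 z) (i4 z) (i5 z) (i6 z); bruteall.
have c3 : #|Ia :|: Ib| = #|Ia| + #|Ib|.
  apply: c0 => z; move: (d z) (i1 z) (i2 z) (i3 z) (i4 z) (i5 z) (i6 z); bruteall.
have c4 : #|Y' :|: K'| = #|Y'| + #|K'|.
  apply: c0 => z; move: (d z) (i1 z) (i2 z) (i3 z) (i4 z) (i5 z) (i6 z); bruteall.
have cl2 : forall X1 X2 Z1 Z2 : {set U}, X1 \subset X2 -> R X1 = R X2 -> Z1 \subset Z2 -> R Z1 = R Z2 ->
    R (X1 :|: Z1) = R (X2 :|: Z2).
  move=> X1 X2 Z1 Z2 s1 e1 s2 e2.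
  rewrite (rk_cl hR Z1 s1 e1) setUC (rk_cl hR X2 s2 e2) setUC //.
have rP : R (Y' :|: Ib) = R (Y :|: B) by apply: cl2.
have rQ : R (Ia :|: K') = R (A :|: K) by apply: cl2.
have rU : R (Ia :|: Ib) = R (A :|: B) by apply: cl2.
have rI : R (Y' :|: K') = R (Y :|: K) by apply: cl2.
have := rk_sub hR (Y' :|: Ib) (Ia :|: K'); rewrite eI eU rP rQ rU rI.
have := rk_le hR (A :|: B); have := rk_mono hR (subsetUl A B).
lia'.
Qed.

Definition somes (T : finType) (B : {set T}) (Z : {set option T}) : {set T} :=
  [set t in B | Some t \in Z].

Definition rho (T : finType) (r : {set T} -> nat) (A B : {set T}) (Z : {set option T}) : nat :=
  if None \in Z then r (A :|: somes B Z) - r A + 1 else r (somes B Z).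

Lemma card_somes (T : finType) (B : {set T}) (Z : {set option T}) :
  #|somes B Z| + (None \in Z) <= #|Z|.
Proof.
have e : #|Some @: somes B Z| = #|somes B Z| by apply: card_imset => x y [].
have s : Some @: somes B Z \subset Z :\ None.
  apply/subsetP => z /imsetP [t]; rewrite !inE => /andP[_ tZ] ->; by rewrite tZ.
rewrite (cardsD1 None Z) addnC leq_add2l -e; exact: subset_leq_card s.
Qed.

Lemma somesU (T : finType) (B : {set T}) (X Y : {set option T}) :
  somes B (X :|: Y) = somes B X :|: somes B Y.
Proof. by apply/setP => t; rewrite !inE; case: (t \in B); case: (Some t \in X). Qed.

Lemma somesI (T : finType) (B : {set T}) (X Y : {set option T}) :
  somes B (X :&: Y) = somes B X :&: somes B Y.
Proof. by apply/setP => t; rewrite !inE; case: (t \in B); case: (Some t \in X). Qed.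

Lemma somesS (T : finType) (B : {set T}) (X Y : {set option T}) :
  X \subset Y -> somes B X \subset somes B Y.
Proof. by move=> s; apply/subsetP => t; rewrite !inE => /andP[-> /(subsetP s)]. Qed.

Lemma somesB (T : finType) (B : {set T}) (X : {set option T}) : somes B X \subset B.
Proof. by apply/subsetP => t; rewrite !inE => /andP[]. Qed.

Lemma rho_rankfun (T : finType) (r : {set T} -> nat) (A B : {set T}) :
  rankfun r -> r A + r B <= r (A :|: B) + 1 -> rankfun (rho r A B).
Proof.
move=> hr hAB.
have kb : forall S : {set T}, S \subset B -> r A + r S <= r (A :|: S) + 1.
  by move=> S sS; apply: (kbound hr (subxx A) sS hAB).
have ge : forall S : {set T}, r A <= r (A :|: S) by move=> S; apply: (rk_mono hr); apply: subsetUl.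
split.
- move=> Z; have := card_somes B Z; rewrite /rho; case: (None \in Z) => /=.
    have := rk_U hr A (somes B Z); have := rk_le hr (somes B Z); lia'.
  have := rk_le hr (somes B Z); lia'.
- move=> X Y sXY; have sS := somesS B sXY; rewrite /rho.
  case NX: (None \in X).
    rewrite (subsetP sXY _ NX).
    have : r (A :|: somes B X) <= r (A :|: somes B Y) by apply: (rk_mono hr); apply: setUS.
    have := ge (somes B X); lia'.
  case NY: (None \in Y).
    have := kb _ (somesB B X); have := ge (somes B Y).
    have : r (A :|: somes B X) <= r (A :|: somes B Y) by apply: (rk_mono hr); apply: setUS.
    lia'.
  exact: (rk_mono hr).
move=> X Y; rewrite /rho somesU somesI !inE.
have gX := ge (somes B X); have gY := ge (somes B Y).
have gU := ge (somes B X :|: somes B Y); have gI := ge (somes B X :&: somes B Y).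
case NX: (None \in X); case NY: (None \in Y) => /=.
- have := rk_sub hr (A :|: somes B X) (A :|: somes B Y).
  have -> : A :|: somes B X :|: (A :|: somes B Y) = A :|: (somes B X :|: somes B Y).
    by rewrite setUACA setUid.
  have -> : (A :|: somes B X) :&: (A :|: somes B Y) = A :|: (somes B X :&: somes B Y).
    by rewrite -setUIr.
  lia'.
- have := rk_sub hr (A :|: somes B X) (somes B Y).
  have -> : A :|: somes B X :|: somes B Y = A :|: (somes B X :|: somes B Y) by rewrite setUA.
  have : r (somes B X :&: somes B Y) <= r ((A :|: somes B X) :&: somes B Y).
    by apply: (rk_mono hr); apply/subsetP => t; rewrite !inE => /andP[h1 h2]; rewrite h1 h2 orbT.
  lia'.
- have := rk_sub hr (A :|: somes B Y) (somes B X).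
  have -> : A :|: somes B Y :|: somes B X = A :|: (somes B X :|: somes B Y).
    by rewrite -setUA (setUC (somes B Y)).
  have : r (somes B X :&: somes B Y) <= r ((A :|: somes B Y) :&: somes B X).
    by apply: (rk_mono hr); apply/subsetP => t; rewrite !inE => /andP[h1 h2]; rewrite h1 h2 orbT.
  lia'.
- exact: (rk_sub hr).
Qed.

Lemma inSome (T : finType) (t : T) (K : {set T}) : (Some t \in Some @: K) = (t \in K).
Proof. by apply: mem_imset => x y []. Qed.

Lemma inNone (T : finType) (K : {set T}) : (None \in Some @: K) = false.
Proof. by apply/imsetP => [[x _]]. Qed.

Lemma somes_im (T : finType) (B K : {set T}) : K \subset B -> somes B (Some @: K) = K.
Proof.
move=> s; apply/setP => t; rewrite !inE inSome.
by case tK: (t \in K); rewrite ?andbF // (subsetP s t tK).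
Qed.

Lemma somes_None (T : finType) (B : {set T}) (X : {set option T}) :
  somes B (None |: X) = somes B X.
Proof. by apply/setP => t; rewrite !inE. Qed.

Lemma somes_Some (T : finType) (B : {set T}) (X : {set option T}) (a : T) :
  a \in B -> somes B (Some a |: X) = a |: somes B X.
Proof.
move=> aB; apply/setP => t; rewrite !inE.
have -> : (Some t == Some a) = (t == a) by [].
by case: (t =P a) => [->|_]; rewrite ?aB.
Qed.

Lemma somes_set1 (T : finType) (B : {set T}) (a : T) :
  a \in B -> somes B [set Some a] = [set a].
Proof.
move=> aB; apply/setP => t; rewrite !inE.
have -> : (Some t == Some a) = (t == a) by [].
by case: (t =P a) => [->|_]; rewrite ?aB ?andbF.
Qed.

Lemma mstruct_eq (T : finType) (M1 M2 : mstruct T) R1 R2 :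
  rstruct M1 R1 -> rstruct M2 R2 -> ground M1 = ground M2 ->
  (forall I : {set T}, I \subset ground M1 -> R1 I = R2 I) -> M1 = M2.
Proof.
case: M1 => g1 i1; case: M2 => g2 i2 /= [_ h1 hg1] [_ h2 hg2] eg hR.
subst g2; congr MStruct; apply/setP => I.
case: (boolP (I \subset g1)) => sI.
  by rewrite h1 h2 hR.
have a1 : (I \in i1) = false by apply/negbTE/negP => /hg1; rewrite (negbTE sI).
have a2 : (I \in i2) = false by apply/negbTE/negP => /hg2; rewrite (negbTE sI).
by rewrite a1 a2.
Qed.

Lemma no_coloop (T : finType) (M : mstruct T) (x : T) :
  is_matroid M -> connected M -> x \in ground M -> 1 < #|ground M| ->
  rank M (ground M :\ x) = rank M (ground M).
Proof.
move=> hM hc xE c2.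
have hr := rank_rankfun hM.
have [y yE yx] : exists2 y, y \in ground M & y != x.
  have : 0 < #|ground M :\ x| by have := cardsD1 x (ground M); rewrite xE /=; lia'.
  case/card_gt0P => y; rewrite !inE => /andP[h1 h2]; by exists y.
have yx' : x != y by rewrite eq_sym.
have [C0 [[sC0 nC0 pC0] xC yC]] := hc x y xE yE yx'.
have i1 : C0 :\ x \in indep M.
  apply: pC0; rewrite properEneq subD1set andbT; apply/negP => /eqP e.
  by move: xC; rewrite -e !inE eqxx.
rewrite rank_indep // in i1; rewrite rank_indep // in nC0.
have c1 := cardsD1 x C0; rewrite xC /= in c1.
have e1 : rank M (x |: (C0 :\ x)) = rank M (C0 :\ x).
  rewrite setD1K //; have := rk_mono hr (subsetDl C0 [set x]); move/eqP: i1; move/eqP: nC0.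
  have := rk_le hr C0; lia'.
have s : C0 :\ x \subset ground M :\ x by apply: setSD.
have := rk_inc_mono hr s e1; rewrite setD1K //.
Qed.

Lemma proper2 (T : finType) (Y : {set T}) (f g : T) :
  Y \proper [set f; g] -> Y \subset [set f] \/ Y \subset [set g].
Proof.
case/properP => sY [x xfg xY].
case/set2P: xfg => ex; subst x.
  right; apply/subsetP => z zY; have := subsetP sY z zY; rewrite !inE.
  by case/orP => /eqP ez //; rewrite -ez zY in xY.
left; apply/subsetP => z zY; have := subsetP sY z zY; rewrite !inE.
by case/orP => /eqP ez //; rewrite -ez zY in xY.
Qed.

Lemma par_circuit (T : finType) (M : mstruct T) (f g : T) :
  is_matroid M -> f != g -> f \in ground M -> g \in ground M ->
  rank M [set f; g] = 1 -> rank M [set f] = 1 -> rank M [set g] = 1 -> in_parallel M f g.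
Proof.
move=> hM fg fE gE h1 h2 h3.
have hr := rank_rankfun hM.
split.
- by rewrite subUset !sub1set fE gE.
- by rewrite rank_indep // h1 cards2 fg.
move=> Y /proper2 [] sY; rewrite rank_indep //; apply/eqP.
  by apply: (rk_indsub hr _ sY); rewrite h2 cards1.
by apply: (rk_indsub hr _ sY); rewrite h3 cards1.
Qed.

Lemma ser_circuit (T : finType) (M : mstruct T) (f g : T) :
  is_matroid M -> connected M -> f != g -> f \in ground M -> g \in ground M ->
  1 < #|ground M| ->
  rank M (ground M :\: [set f; g]) < rank M (ground M) -> in_series M f g.
Proof.
move=> hM hc fg fE gE c2 hlt.
have hr := rank_rankfun hM.
have hs := rstruct_matroid hM.
split.
- by rewrite /dual /= subUset !sub1set fE gE.
- rewrite (rstruct_dual _ hs) negb_and; apply/orP; right.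
  by apply/eqP => e; rewrite e ltnn in hlt.
move=> Y hY; rewrite (rstruct_dual _ hs).
have sY : Y \subset ground M.
  apply: subset_trans (proper_sub hY) _; by rewrite subUset !sub1set fE gE.
rewrite sY /=; apply/eqP.
have m1 : rank M (ground M :\: Y) <= rank M (ground M) by apply: (rk_mono hr); apply: subsetDl.
case: (proper2 hY) => s1.
  have := no_coloop hM hc fE c2.
  have : rank M (ground M :\ f) <= rank M (ground M :\: Y) by apply: (rk_mono hr); apply: setDS.
  lia'.
have := no_coloop hM hc gE c2.
have : rank M (ground M :\ g) <= rank M (ground M :\: Y) by apply: (rk_mono hr); apply: setDS.
lia'.
Qed.

Definition goodM (T : finType) (r : {set T} -> nat) (A B : {set T}) (f : T) (K : {set T}) : Prop :=
  [/\ K \subset B :\ f, r (A :|: K) = r A + r K, r (f |: K) = (r K).+1 &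
      r (A :|: (f |: K)) = r (A :|: K)].

Unset Implicit Arguments.

Theorem lemma2p17 (T : finType) (M N : mstruct T) (A B : {set T}) (f : T) :
  is_matroid M -> connected M ->
  has_minor M N ->
  (forall x, ~ is_loop N x) -> (forall x, ~ is_coloop N x) ->
  two_separation M A B ->
  B :&: ground N = [set f] ->
  (forall g, g != f -> ~ in_series M f g /\ ~ in_parallel M f g) ->
  exists2 e, e \in B :\ f &
    has_minor (delete M [set e]) N /\ has_minor (contract M [set e]) N.
Proof.
move=> hM hconn [C [D [sCD dCD eN]]] hnl hnc [hAB dAB cA cB hlam] hBG hsp.
have hsM := rstruct_matroid hM.
have hr : rankfun (rank M) := rank_rankfun hM.
set r := rank M in hr hsM hlam *.
have hEm : forall z, (z \in ground M) = (z \in A) || (z \in B).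
  by move=> z; rewrite -hAB inE.
have hd := disimp dAB.
have hCE : forall z, (z \in C) ==> (z \in ground M).
  by move=> z; apply/implyP => zC; apply: (subsetP sCD); rewrite inE zC.
have hDE : forall z, (z \in D) ==> (z \in ground M).
  by move=> z; apply/implyP => zD; apply: (subsetP sCD); rewrite inE zD orbT.
have hCD := disimp dCD.
have hGN : ground N = (ground M :\: C) :\: D by rewrite eN.
have hfz : forall z, ((z \in B) && (z \in ground N)) = (z == f).
  by move=> z; rewrite -in_setI hBG inE.
have fG : f \in ground N by move: (hfz f); rewrite eqxx => /andP[].
have fB : f \in B by move: (hfz f); rewrite eqxx => /andP[].
have fC : f \notin C by move: fG; rewrite hGN !inE => /andP[_ /andP[]].
have fD : f \notin D by move: fG; rewrite hGN !inE => /andP[].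
have hrAB : r A + r B <= r (A :|: B) + 1.
  move: hlam; rewrite /lambda /mrank -/r -hAB.
  have -> : (A :|: B) :\: A = B.
    by apply/setP => z; move: (hd z); rewrite !inE; bruteall.
  lia'.
have hsN : rstruct N (fun Z => r ((Z :\: D) :|: C) - r C).
  by rewrite eN; exact: (rstruct_delete D (rstruct_contract C hsM)).
have nloop : r (f |: C) = (r C).+1.
  have h : [set f] \in indep N.
    apply/negPn/negP => h; apply: (hnl f); split => //.
  case: hsN => _ hI _; rewrite hI cards1 in h.
  have e : [set f] :\: D = [set f] by apply/setP => z; rewrite !inE; case: (z =P f) => [->|_]; rewrite ?fD ?andbF.
  rewrite e in h.
  have := rk_mono hr (subsetUr [set f] C); move/eqP: h; lia'.
have ncoloop : r ((ground N :\ f) :|: C) = r (ground N :|: C).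
  have h : [set f] \in indep (dual N).
    apply/negPn/negP => h; apply: (hnc f); rewrite /is_coloop /is_loop; split => //.
  move: h; rewrite (rstruct_dual _ hsN) => /andP[_ /eqP h'].
  have e1 : (ground N :\: [set f]) :\: D = ground N :\ f.
    apply/setP => z; rewrite hGN; move: (hCD z); rewrite !inE; bruteall.
  have e2 : ground N :\: D = ground N.
    apply/setP => z; rewrite hGN; move: (hCD z); rewrite !inE; bruteall.
  rewrite e1 e2 in h'.
  have := rk_mono hr (subsetUr (ground N :\ f) C); have := rk_mono hr (subsetUr (ground N) C).
  lia'.
pose Ca := C :&: A; pose Cb := C :&: B.
pose Ya := (ground N :\ f) :|: Ca.
have hG : forall z, (z \in ground N) = (z \notin D) && ((z \notin C) && (z \in ground M)).
  by move=> z; rewrite hGN !inE.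
have eC : C = Ca :|: Cb.
  apply/setP => z; rewrite /Ca /Cb; move: (hCE z) (hEm z); rewrite !inE; bruteall.
have eY1 : (ground N :\ f) :|: C = Ya :|: Cb.
  apply/setP => z; rewrite /Ya /Ca /Cb; move: (hCE z) (hEm z); rewrite !inE; bruteall.
have eY2 : ground N :|: C = f |: (Ya :|: Cb).
  apply/setP => z; rewrite /Ya /Ca /Cb; move: (hCE z) (hEm z) (hG z) (hfz z); rewrite !inE; bruteall.
have YaA : Ya \subset A.
  apply/subsetP => z; rewrite /Ya /Ca; move: (hfz z) (hG z) (hEm z) (hd z); rewrite !inE; bruteall.
have CbB' : Cb \subset B :\ f.
  apply/subsetP => z; rewrite /Cb; move: (hfz z) (hG z) (hEm z) (hCE z); rewrite !inE; bruteall.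
rewrite eY1 eY2 in ncoloop.
have BA : [disjoint A & B] := dAB.
have CbC : Cb \subset C by apply: subsetIl.
have CbB : Cb \subset B by apply: subsetIr.
have fCbB : f |: Cb \subset B by rewrite subUset sub1set fB CbB.
have alpha : r (f |: Cb) = (r Cb).+1.
  have := rk_add1 hr f Cb; have := rk_add1' hr f Cb.
  case: (leqP (r (f |: Cb)) (r Cb)) => a1 a2 a3; last lia'.
  have e : r (f |: Cb) = r Cb by lia'.
  have := rk_inc_mono hr CbC e; rewrite nloop; lia'.
have gamma : r (A :|: (f |: Cb)) = r (A :|: Cb).
  have s : Ya :|: Cb \subset A :|: Cb by apply: setSU.
  have := rk_inc_mono hr s (esym ncoloop); by rewrite setUCA.
have beta : r (A :|: Cb) = r A + r Cb.
  have kb1 := kbound hr YaA fCbB hrAB.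
  have kb2 := kbound hr YaA CbB hrAB.
  have ku := rk_U hr Ya Cb.
  have e1 : r (Ya :|: (f |: Cb)) = r (Ya :|: Cb) by rewrite setUCA.
  have k0 : r Ya + r Cb = r (Ya :|: Cb) by lia'.
  have k1 : r Ya + r B = r (Ya :|: B) + 1.
    have := kmono2 hr Ya fCbB; have := kbound hr YaA (subxx B) hrAB; lia'.
  have kA := kbound hr (subxx A) CbB hrAB.
  have := rk_U hr A Cb.
  case: (leqP (r A + r Cb) (r (A :|: Cb))) => a1 a2; first lia'.
  have k3 : r A + r Cb = r (A :|: Cb) + 1 by lia'.
  have := K2lem hr BA YaA CbB hrAB k1 k3; lia'.
have goodCb : goodM r A B f Cb by split.
have form : forall K Y : {set T}, goodM r A B f K -> Y \subset A ->
    r (Y :|: K) = r Y + r K /\ r (Y :|: (f |: K)) + (r Y + r B - r (Y :|: B)) = r Y + r K + 1.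
  move=> K Y [sK g1 g2 g3] sY.
  have KB : K \subset B by apply: subset_trans sK (subsetDl _ _).
  have fKB : f |: K \subset B by rewrite subUset sub1set fB KB.
  split.
    have := kmono hr K sY; have := rk_U hr Y K; lia'.
  have kY := kbound hr sY (subxx B) hrAB.
  have uY := rk_U hr Y B.
  have uf := rk_U hr Y (f |: K).
  have m2 := kmono2 hr Y fKB.
  have kA : r A + r (f |: K) = r (A :|: (f |: K)) + 1 by lia'.
  case: (leqP (r Y + r B) (r (Y :|: B))) => a1; first lia'.
  have kY1 : r Y + r B = r (Y :|: B) + 1 by lia'.
  have := K2lem hr BA sY fKB hrAB kY1 kA; lia'.
have CaA : Ca \subset A by apply: subsetIr.
have same : forall K K' I : {set T}, goodM r A B f K -> goodM r A B f K' -> I \subset ground N ->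
    r (I :|: (Ca :|: K)) + r (Ca :|: K') = r (I :|: (Ca :|: K')) + r (Ca :|: K).
  move=> K K' I gK gK' sI.
  have sIz := subimp sI.
  have [sK _ _ _] := gK; have [sK' _ _ _] := gK'.
  have sKz := subimp sK; have sK'z := subimp sK'.
  have YA : (I :\ f) :|: Ca \subset A.
    apply/subsetP => z; move: (sIz z) (hfz z) (hG z) (hEm z) (hd z); rewrite /Ca !inE; bruteall.
  have [a1 b1] := form K _ gK YA.
  have [a2 b2] := form K' _ gK' YA.
  have [a3 _] := form K _ gK CaA.
  have [a4 _] := form K' _ gK' CaA.
  rewrite a3 a4.
  case fI: (f \in I).
    have fIz : forall z, (z == f) ==> (z \in I) by move=> z; apply/implyP => /eqP ->.
    have e1 : forall X : {set T}, X \subset B :\ f -> I :|: (Ca :|: X) = ((I :\ f) :|: Ca) :|: (f |: X).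
      move=> X sX; have sXz := subimp sX.
      apply/setP => z; move: (fIz z) (sXz z); rewrite /Ca !inE; bruteall.
    rewrite (e1 K sK) (e1 K' sK'); lia'.
  have fIz : forall z, (z == f) ==> (z \notin I) by move=> z; apply/implyP => /eqP ->; rewrite fI.
  have e1 : forall X : {set T}, X \subset B :\ f -> I :|: (Ca :|: X) = ((I :\ f) :|: Ca) :|: X.
    move=> X sX; have sXz := subimp sX.
    apply/setP => z; move: (fIz z) (sXz z); rewrite /Ca !inE; bruteall.
  rewrite (e1 K sK) (e1 K' sK'); lia'.
have hrho : rankfun (rho r A B) := rho_rankfun hr hrAB.
pose Er : {set option T} := None |: (Some @: B).
have pf : (None : option T) != Some f by [].
have pEr : None \in Er by rewrite !inE.
have fEr : Some f \in Er by rewrite !inE inSome fB.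
have geA : forall S : {set T}, r A <= r (A :|: S) by move=> S; apply: (rk_mono hr); apply: subsetUl.
have goodtr : forall K : {set T}, K \subset B ->
    (goodc (rho r A B) Er None (Some f) (Some @: K) <-> goodM r A B f K).
  move=> K sK.
  have sfK : f |: K \subset B by rewrite subUset sub1set fB sK.
  have nK : (None \in Some @: K) = false by apply: inNone.
  have r1 : rho r A B (Some @: K) = r K by rewrite /rho nK somes_im.
  have r2 : rho r A B (None |: Some @: K) = r (A :|: K) - r A + 1.
    by rewrite /rho !inE eqxx /= somes_None somes_im.
  have r3 : rho r A B (Some f |: Some @: K) = r (f |: K).
    by rewrite /rho !inE nK /= somes_Some // somes_im.
  have r4 : rho r A B (None |: (Some f |: Some @: K)) = r (A :|: (f |: K)) - r A + 1.
    by rewrite /rho !inE eqxx /= somes_None somes_Some // somes_im.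
  have hs : (Some @: K \subset Er :\: [set None; Some f]) = (K \subset B :\ f).
    apply/idP/idP => /subsetP h; apply/subsetP => z.
      move=> zK; have := h (Some z); rewrite inSome zK => /(_ isT).
      rewrite !inE inSome => /andP[h1 h2]; rewrite (subsetP sK z zK) andbT.
      by apply: contra h1 => /eqP ->; rewrite eqxx orbT.
    case/imsetP => t tK ->; have := h t tK; rewrite !inE inSome => /andP[h1 h2].
    move: h1 h2 => h1 h2; have e1 : (Some t == None) = false by []; have e2 : (Some t == Some f) = (t == f) by []; by rewrite e1 e2 /= h2 h1.
  rewrite /goodc /goodM hs r1 r2 r3 r4.
  have := geA K; have := geA (f |: K); have := rk_mono hr (setUS A (subsetUr [set f] K)).
  have := rk_U hr A K.
  move=> a1 a2 a3 a4; split; case=> b1 b2 b3 b4; split => //; lia'.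
have goodback : forall Kr : {set option T}, goodc (rho r A B) Er None (Some f) Kr -> Kr = Some @: (somes B Kr).
  move=> Kr [sKr _ _ _]; apply/setP; case => [t|].
    rewrite inSome !inE; case tK: (Some t \in Kr); rewrite ?andbF //.
    have e1 : (Some t == None) = false by [].
    by have := subsetP sKr _ tK; rewrite !inE inSome e1 /= => /andP[_ ->].
  rewrite inNone; apply/negbTE/negP => h; have := subsetP sKr _ h; by rewrite !inE eqxx.
have finish : forall K1 K2 e, goodM r A B f K1 -> goodM r A B f K2 -> e \in K2 -> e \notin K1 ->
    exists2 e, e \in B :\ f &
      has_minor (delete M [set e]) N /\ has_minor (contract M [set e]) N.
  move=> K1 K2 e g1 g2 eK2 eK1.
  have [s1 _ _ _] := g1; have [s2 _ _ _] := g2.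
  have eB : e \in B :\ f := subsetP s2 e eK2.
  have s1z := subimp s1; have s2z := subimp s2.
  have hez : forall z, (z == e) ==> ((z \in K2) && (z \notin K1)).
    by move=> z; apply/implyP => /eqP ->; rewrite eK2 eK1.
  exists e => //; split.
    exists (Ca :|: K1), ((D :&: A) :|: ((B :\ f) :\: (e |: K1))); split.
    - apply/subsetP => z; rewrite /= /Ca.
      move: (hCE z) (hDE z) (hEm z) (hd z) (s1z z) (s2z z) (hez z); rewrite !inE; bruteall.
    - rewrite -setI_eq0; apply/eqP/setP => z; rewrite /Ca.
      move: (hCD z) (hd z) (s1z z) (s2z z) (hez z); rewrite !inE; bruteall.
    have rs1 := rstruct_delete ((D :&: A) :|: ((B :\ f) :\: (e |: K1)))
                 (rstruct_contract (Ca :|: K1) (rstruct_delete [set e] hsM)).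
    apply: (mstruct_eq hsN rs1).
      rewrite /= hGN; apply/setP => z; rewrite /Ca.
      move: (hCE z) (hDE z) (hEm z) (hd z) (hCD z) (hfz z) (hG z) (s1z z) (s2z z) (hez z).
      rewrite hGN !inE; bruteall.
    move=> I sI; rewrite /=.
    have sIz := subimp sI.
    have e1 : (I :\: D) :|: C = I :|: (Ca :|: Cb).
      apply/setP => z; rewrite /Ca /Cb; move: (sIz z) (hG z) (hEm z) (hCE z); rewrite !inE; bruteall.
    have e2 : ((I :\: ((D :&: A) :|: ((B :\ f) :\: (e |: K1)))) :|: (Ca :|: K1)) :\: [set e]
              = I :|: (Ca :|: K1).
      apply/setP => z; rewrite /Ca.
      move: (sIz z) (hG z) (hEm z) (hfz z) (hd z) (s1z z) (s2z z) (hez z); rewrite !inE; bruteall.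
    have e3 : (Ca :|: K1) :\: [set e] = Ca :|: K1.
      apply/setP => z; rewrite /Ca.
      move: (hfz z) (hd z) (s1z z) (s2z z) (hez z) (hCE z) (hEm z); rewrite !inE; bruteall.
    rewrite e1 e2 e3 -eC.
    have := same K1 Cb I g1 goodCb sI; rewrite -eC.
    have := rk_mono hr (subsetUr I C); have := rk_mono hr (subsetUr I (Ca :|: K1)).
    lia'.
  exists (Ca :|: (K2 :\ e)), ((D :&: A) :|: ((B :\ f) :\: K2)); split.
  - apply/subsetP => z; rewrite /= /Ca.
    move: (hCE z) (hDE z) (hEm z) (hd z) (s2z z) (hez z); rewrite !inE; bruteall.
  - rewrite -setI_eq0; apply/eqP/setP => z; rewrite /Ca.
    move: (hCD z) (hd z) (s2z z) (hez z); rewrite !inE; bruteall.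
  have rs2 := rstruct_delete ((D :&: A) :|: ((B :\ f) :\: K2))
               (rstruct_contract (Ca :|: (K2 :\ e)) (rstruct_contract [set e] hsM)).
  apply: (mstruct_eq hsN rs2).
    rewrite /= hGN; apply/setP => z; rewrite /Ca.
    move: (hCE z) (hDE z) (hEm z) (hd z) (hCD z) (hfz z) (hG z) (s2z z) (hez z).
    rewrite hGN !inE; bruteall.
  move=> I sI; rewrite /=.
  have sIz := subimp sI.
  have e1 : (I :\: D) :|: C = I :|: (Ca :|: Cb).
    apply/setP => z; rewrite /Ca /Cb; move: (sIz z) (hG z) (hEm z) (hCE z); rewrite !inE; bruteall.
  have e2 : ((I :\: ((D :&: A) :|: ((B :\ f) :\: K2))) :|: (Ca :|: (K2 :\ e))) :|: [set e]
            = I :|: (Ca :|: K2).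
    apply/setP => z; rewrite /Ca.
    move: (sIz z) (hG z) (hEm z) (hfz z) (hd z) (s2z z) (hez z); rewrite !inE; bruteall.
  have e3 : (Ca :|: (K2 :\ e)) :|: [set e] = Ca :|: K2.
    apply/setP => z; rewrite /Ca; move: (hez z); rewrite !inE; bruteall.
  rewrite e1 e2 e3 -eC.
  have := same K2 Cb I g2 goodCb sI; rewrite -eC.
  have := rk_mono hr (subsetUr I C); have := rk_mono hr (subsetUr I (Ca :|: K2)).
  have se : [set e] \subset Ca :|: K2 by rewrite sub1set !inE eK2 orbT.
  have := rk_mono hr se.
  lia'.
case: (classic (exists Kr : {set option T},
          goodc (rho r A B) Er None (Some f) Kr /\ Kr <> Some @: Cb)) => [[Kr [gKr nKr]]|hno].
  have eKr := goodback Kr gKr.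
  have sKB : somes B Kr \subset B := somesB B Kr.
  have gK : goodM r A B f (somes B Kr) by apply/(goodtr _ sKB); rewrite -eKr.
  have nK : somes B Kr != Cb by apply/eqP => e; apply: nKr; rewrite eKr e.
  case: (boolP (somes B Kr \subset Cb)) => sub.
    have : somes B Kr \proper Cb by rewrite properEneq nK sub.
    case/properP => _ [e eCb eK].
    exact: (finish _ _ e gK goodCb eCb eK).
  case/subsetPn: sub => e eK eCb.
  exact: (finish _ _ e goodCb gK eK eCb).
exfalso.
have uniq : forall Kr, goodc (rho r A B) Er None (Some f) Kr -> Kr = Some @: Cb.
  by move=> Kr gKr; apply: NNPP => h; apply: hno; exists Kr.
have [g0 g0B g0f] : exists2 g0, g0 \in B & g0 != f.
  have : 0 < #|B :\ f| by have := cardsD1 f B; rewrite fB /=; lia'.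
  case/card_gt0P => g0; rewrite !inE => /andP[h1 h2]; by exists g0.
have hne : exists x, x \in Er :\: [set None; Some f].
  exists (Some g0); rewrite !inE inSome g0B orbT andbT.
  have -> : (Some g0 == Some f) = (g0 == f) by [].
  by rewrite (negbTE g0f).
have [g gE hc] := core pf hrho pEr fEr ((goodtr Cb CbB).2 goodCb) uniq hne.
case: g gE hc => [g1|]; last by rewrite !inE eqxx.
rewrite !inE inSome => /andP[hg1 hg2] hc.
have e1 : (Some g1 == Some f) = (g1 == f) by [].
rewrite e1 negb_or in hg1; case/andP: hg1 => _ g1f.
have g1B : g1 \in B by move: hg2.
have [hs1 hs2] := hsp g1 g1f.
have fE : f \in ground M by rewrite hEm fB orbT.
have g1E : f \in ground M by rewrite hEm fB orbT.
have g1E' : g1 \in ground M by rewrite hEm g1B orbT.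
have fg1 : f != g1 by rewrite eq_sym.
case: hc => [[h1 [h2 h3]]|hs].
  apply: hs2; apply: (par_circuit hM fg1 fE g1E').
  - move: h1; rewrite /rho !inE /=.
    by rewrite somes_Some // somes_set1.
  - by move: h2; rewrite /rho !inE /= somes_set1.
  - by move: h3; rewrite /rho !inE /= somes_set1.
apply: hs1; apply: (ser_circuit hM hconn fg1 fE g1E').
  have sB : B \subset ground M by rewrite -hAB subsetUr.
  by apply: leq_trans cB (subset_leq_card sB).
move: hs; rewrite /rho !inE eqxx /= somes_None somes_im //.
have -> : somes B (Er :\: [set Some f; Some g1]) = B :\: [set f; g1].
  apply/setP => t; rewrite !inE inSome.
  have -> : (Some t == Some f) = (t == f) by [].
  have -> : (Some t == Some g1) = (t == g1) by [].
  by case: (t \in B); rewrite ?andbF ?andbT.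
have -> : ground M :\: [set f; g1] = A :|: (B :\: [set f; g1]).
  apply/setP => z; move: (hEm z) (hd z).
  have hf : (z == f) ==> (z \in B) by apply/implyP => /eqP ->.
  have hg : (z == g1) ==> (z \in B) by apply/implyP => /eqP ->.
  move: hf hg; rewrite !inE; bruteall.
rewrite /r -hAB.
have := rk_mono hr (subsetUl A (B :\: [set f; g1])); have := rk_mono hr (subsetUl A B).
lia'.
Qed.
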